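(* Let $\mathbb{F}$ be a field and let $\mathcal{C}_2 \subsetneqq \mathcal{C}_1 \subseteq \mathbb{F}^{m \times n}$ be linear codes with $\ell = \dim(\mathcal{C}_1) - \dim(\mathcal{C}_2)$. Then for every $1 \leq r \leq \ell$, $$d_{M,r}(\mathcal{C}_1,\mathcal{C}_2) \leq n - \left\lceil \frac{\ell - r + 1}{m} \right\rceil + 1.$$ In particular, $\dim(\mathcal{C}_1) - \dim(\mathcal{C}_2) \leq \max\{m,n\}(\min\{m,n\} - d_R(\mathcal{C}_1,\mathcal{C}_2) + 1)$.
   Context: ${\rm Row}(C)$ is the row space of a matrix $C$ and ${\rm Rk}(C) = \dim {\rm Row}(C)$. For a subspace $\mathcal{L} \subseteq \mathbb{F}^n$, $\mathcal{V}_\mathcal{L} = \{V \in \mathbb{F}^{m\times n} \mid {\rm Row}(V) \subseteq \mathcal{L}\}$. For nested linear codes and $1 \le r \le \ell$, $d_{M,r}(\mathcal{C}_1,\mathcal{C}_2) = \min\{\dim \mathcal{L} \mid \mathcal{L} \subseteq \mathbb{F}^n \text{ subspace}, \dim(\mathcal{C}_1 \cap \mathcal{V}_\mathcal{L}) - \dim(\mathcal{C}_2 \cap \mathcal{V}_\mathcal{L}) \geq r\}$, and $d_R(\mathcal{C}_1,\mathcal{C}_2) = \min\{{\rm Rk}(C) \mid C \in \mathcal{C}_1 \setminus \mathcal{C}_2\}$. *)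

(* Defs.v *)
From HB Require Import structures.
From mathcomp Require Import all_boot all_order all_algebra.
From mathcomp Require Import boolp.
Set Implicit Arguments. Unset Strict Implicit. Unset Printing Implicit Defensive.
Import GRing.Theory.
Local Open Scope ring_scope.

(* Codes are subspaces of the vector space 'M[F]_(m, n); subspaces of F^n are
   {vspace 'rV[F]_n}.  Row(V) is spanned by the rows  row i V. *)

(* V_L = { V in F^{m x n} | Row(V) <= L }  =  { V | forall i, row i V \in L }. *)
Definition VL (F : fieldType) (m n : nat) (L : {vspace 'rV[F]_n})
  : {vspace 'M[F]_(m, n)} :=
  (\bigcap_(i < m) (linfun (row i : 'M[F]_(m, n) -> 'rV[F]_n)) @^-1: L)%VS.

Definition gapL (F : fieldType) (m n : nat) (C1 C2 : {vspace 'M[F]_(m, n)})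
  (L : {vspace 'rV[F]_n}) : nat :=
  (\dim (C1 :&: VL m L) - \dim (C2 :&: VL m L))%N.

Definition dM_pred (F : fieldType) (m n : nat) (C1 C2 : {vspace 'M[F]_(m, n)})
  (r : nat) : pred nat :=
  fun k => `[< exists L : {vspace 'rV[F]_n}, \dim L = k /\ (r <= gapL C1 C2 L)%N >].

(* d_{M,r}(C1,C2) = min { dim L | gap(L) >= r }  (0 if the set is empty,
   which never happens for 1 <= r <= dim C1 - dim C2). *)
Definition dMr (F : fieldType) (m n : nat) (C1 C2 : {vspace 'M[F]_(m, n)})
  (r : nat) : nat :=
  match pselect (exists k, dM_pred C1 C2 r k) with
  | left e => ex_minn e
  | right _ => 0%N
  end.

Definition dR_pred (F : fieldType) (m n : nat) (C1 C2 : {vspace 'M[F]_(m, n)})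
  : pred nat :=
  fun k => `[< exists C : 'M[F]_(m, n),
               [/\ C \in C1, C \notin C2 & \rank C = k] >].

(* d_R(C1,C2) = min { Rk(C) | C in C1 \ C2 }  (0 if C1 \ C2 is empty). *)
Definition dR (F : fieldType) (m n : nat) (C1 C2 : {vspace 'M[F]_(m, n)}) : nat :=
  match pselect (exists k, dR_pred C1 C2 k) with
  | left e => ex_minn e
  | right _ => 0%N
  end.

Definition ceildiv (a b : nat) : nat := ((a + b.-1) %/ b)%N.

(* Main.v *)
Require Import Defs.
From HB Require Import structures.
From mathcomp Require Import all_boot all_order all_algebra.
From mathcomp Require Import boolp zify.
Import GRing.Theory Num.Theory.
Local Open Scope ring_scope.
Set Implicit Arguments. Unset Strict Implicit.

Section S.
Variables (F : fieldType) (m n : nat).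

Lemma dimM : \dim (fullv : {vspace 'M[F]_(m,n)}) = (m * n)%N.
Proof. by rewrite dimvf dim_matrix. Qed.

Lemma dimR : \dim (fullv : {vspace 'rV[F]_n}) = n.
Proof. rewrite dimvf dim_matrix. lia. Qed.

Lemma dimL_le (L : {vspace 'rV[F]_n}) : (\dim L <= n)%N.
Proof. by have := dimvS (subvf L); rewrite dimR. Qed.

Lemma dim_preim_row (L : {vspace 'rV[F]_n}) (i : 'I_m) :
  (\dim (linfun (row i : 'M[F]_(m,n) -> 'rV_n) @^-1: L) + n = m*n + \dim L)%N.
Proof.
set f := linfun _.
have limgf : limg f = fullv.
  apply/eqP; rewrite eqEsubv subvf /=; apply/subvP => v _.
  apply/memv_imgP; exists (\matrix_(j < m) v); first exact: memvf.
  by rewrite lfunE /= rowK.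
have h1 := limg_ker_dim f fullv.
rewrite capfv limgf dimR dimM in h1.
have h2 := limg_ker_dim f (f @^-1: L)%VS.
rewrite lpreimK ?limgf ?subvf // in h2.
have e : ((f @^-1: L) :&: lker f = lker f)%VS.
  apply/capv_idPr; apply/subvP => u; rewrite memv_ker -memv_preim => /eqP ->.
  exact: mem0v.
rewrite e in h2. by rewrite -h2 -h1 addnAC.
Qed.

Lemma cap_bound (U V : {vspace 'M[F]_(m,n)}) :
  (\dim U + \dim V <= \dim (U :&: V) + m * n)%N.
Proof.
rewrite -dimv_sum_cap -dimM addnC leq_add2l; exact: dimvS (subvf _).
Qed.

Lemma size_ie : size (index_enum 'I_m) = m.
Proof. by rewrite [index_enum _]unlock -enumT size_enum_ord. Qed.

Lemma VL_bound (U : {vspace 'M[F]_(m,n)}) L :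
  (\dim U <= \dim (U :&: VL m L) + m * (n - \dim L))%N.
Proof.
rewrite /VL.
set P := fun i : 'I_m => (linfun (row i : 'M[F]_(m, n) -> 'rV_n) @^-1: L)%VS.
suff gen : forall s : seq 'I_m, (\dim U <= \dim (U :&: \big[capv/fullv]_(i <- s) P i)
   + size s * (n - \dim L))%N.
  by have := gen (index_enum 'I_m); rewrite size_ie.
elim => [|a s IH]; first by rewrite big_nil capvf addn0.
rewrite big_cons capvA (capvC U) -capvA.
have h1 := cap_bound (P a) (U :&: \big[capv/fullv]_(i <- s) P i).
have h2 := dim_preim_row L a.
have h3 := dimL_le L.
rewrite /= -/(P a) in h2.
move: h1 h2 h3 IH; rewrite [size (a :: s)]/= mulSn.
move: (\dim (P a)) (\dim L) (\dim U) (\dim (U :&: \big[capv/fullv]_(i <- s) P i))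
  (\dim (P a :&: (U :&: \big[capv/fullv]_(i <- s) P i))) (size s) (m * n)%N => x y z w v t q.
move: (t * (n - y))%N => p.
lia.
Qed.

Lemma exists_dim (vT : vectType F) k : (k <= \dim (fullv : {vspace vT}))%N ->
  exists L : {vspace vT}, \dim L = k.
Proof.
move=> hk; set b := vbasis (fullv : {vspace vT}).
have fb := basis_free (vbasisP (fullv : {vspace vT})).
exists <<take k b>>%VS.
have := @catl_free _ _ (drop k b) (take k b); rewrite cat_take_drop => /(_ fb).
by rewrite /free => /eqP ->; rewrite size_takel // size_tuple.
Qed.

Lemma part1 (C1 C2 : {vspace 'M[F]_(m,n)}) r :
  (0 < m)%N -> (1 <= r <= \dim C1 - \dim C2)%N ->
  (dMr C1 C2 r <= n - (\dim C1 - \dim C2 - r) %/ m)%N.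
Proof.
move=> m0 /andP[r1 rl].
set q := ((\dim C1 - \dim C2 - r) %/ m)%N.
have qm : (q * m <= \dim C1 - \dim C2 - r)%N by apply: leq_trunc_div.
have c1 : (\dim C1 <= m * n)%N by rewrite -dimM dimvS // subvf.
have qn : (q <= n)%N.
  by rewrite -(leq_pmul2r m0); apply: (leq_trans qm); rewrite mulnC; lia.
have [L hL] : exists L : {vspace 'rV[F]_n}, \dim L = (n - q)%N.
  by apply: exists_dim; rewrite dimR leq_subr.
have P : dM_pred C1 C2 r (n - q)%N.
  apply/asboolP; exists L; split => //.
  rewrite /gapL.
  have h1 := VL_bound C1 L.
  have h2 : (\dim (C2 :&: VL m L) <= \dim C2)%N by apply: dimvS; apply: capvSl.
  rewrite hL in h1.
  move: h1 h2 qm rl; move: (\dim C1) (\dim C2) (\dim (C1 :&: VL m L))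
     (\dim (C2 :&: VL m L)) => a b c d.
  have -> : (n - (n - q) = q)%N by lia.
  rewrite mulnC; move: (q * m)%N => p; lia.
rewrite /dMr; case: pselect => [e|//].
by case: ex_minnP => k _ /(_ _ P).
Qed.

Lemma rank_rows (L : {vspace 'rV[F]_n}) (A : 'M[F]_(m,n)) :
  (forall i, row i A \in L) -> (\rank A <= \dim L)%N.
Proof.
move=> h.
set Cm := \matrix_(i < m, j < \dim L) coord (vbasis L) j (row i A).
set B := \matrix_(j < \dim L) (vbasis L)`_j.
have -> : A = Cm *m B.
  apply/row_matrixP => i; rewrite row_mul mulmx_sum_row {1}(coord_vbasis (h i)).
  by apply: eq_bigr => j _; rewrite !mxE rowK.
exact: leq_trans (mxrankM_maxl _ _) (rank_leq_col _).
Qed.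

Lemma VL_row (L : {vspace 'rV[F]_n}) (A : 'M[F]_(m,n)) i :
  A \in VL m L -> row i A \in L.
Proof.
move=> hA; have : A \in (linfun (row i : 'M[F]_(m, n) -> 'rV_n) @^-1: L)%VS.
  by apply: (subvP (@bigcapv_inf _ _ _ i xpredT _ _ isT (subvv _))) hA.
by rewrite -memv_preim lfunE.
Qed.

Lemma part2 (C1 C2 : {vspace 'M[F]_(m,n)}) d : (1 <= d <= n)%N ->
  (forall A, A \in C1 -> A \notin C2 -> (d <= \rank A)%N) ->
  (\dim C1 - \dim C2 <= m * (n - d + 1))%N.
Proof.
move=> /andP[d1 dn] hd.
have [L hL] : exists L : {vspace 'rV[F]_n}, \dim L = d.-1.
  by apply: exists_dim; rewrite dimR; lia.
have h1 := VL_bound C1 L.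
have h2 : (\dim (C1 :&: VL m L) <= \dim C2)%N.
  apply: dimvS; apply/subvP => A /memv_capP [a1 a2].
  apply/negPn/negP => na; have := hd A a1 na.
  have := rank_rows (fun i => VL_row i a2); rewrite hL; lia.
rewrite hL in h1.
have -> : (n - d + 1 = n - d.-1)%N by lia.
move: h1 h2; move: (\dim C1) (\dim C2) (\dim (C1 :&: VL m L)) (m * (n - d.-1))%N.
move=> a b c p; lia.
Qed.
End S.

Lemma part2T (F : fieldType) m n (C1 C2 : {vspace 'M[F]_(m,n)}) d : (1 <= d <= m)%N ->
  (forall A, A \in C1 -> A \notin C2 -> (d <= \rank A)%N) ->
  (\dim C1 - \dim C2 <= n * (m - d + 1))%N.
Proof.
move=> hd1 hd.
set f := linfun (trmx : 'M[F]_(m,n) -> 'M[F]_(n,m)).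
have kf : lker f = 0%VS.
  apply/eqP/lker0P => x y; rewrite !lfunE; exact: trmx_inj.
have dimf : forall C, \dim (f @: C)%VS = \dim C.
  by move=> C; apply: limg_dim_eq; rewrite kf capv0.
have := @part2 F n m (f @: C1)%VS (f @: C2)%VS d hd1.
rewrite !dimf; apply => A' /memv_imgP [A a1 ->] na.
have a2 : A \notin C2.
  by apply: contra na => a2; apply: memv_img.
by rewrite lfunE /= mxrank_tr; apply: hd.
Qed.


Unset Implicit Arguments.
Theorem theorem5 (F : fieldType) (m n : nat) (C1 C2 : {vspace 'M[F]_(m, n)}) :
  (C2 <= C1)%VS -> C2 != C1 ->
  let l := (\dim C1 - \dim C2)%N in
  (forall r : nat, (1 <= r <= l)%N ->
     (dMr C1 C2 r)%:Z <= n%:Z - (ceildiv (l - r + 1) m)%:Z + 1)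
  /\ l%:Z <= (maxn m n)%:Z * ((minn m n)%:Z - (dR C1 C2)%:Z + 1).
Proof.
move=> sub neq l.
have [A0 a01 a02] : exists2 A, A \in C1 & A \notin C2.
  apply/subvPn; apply: contra neq => h; by rewrite eqEsubv sub h.
have c1 : (\dim C1 <= m * n)%N by rewrite -(@dimM F m n) dimvS // subvf.
split.
  move=> r hr.
  have m0 : (0 < m)%N.
    rewrite lt0n; apply/eqP => m00; have mn0 : (m * n = 0)%N by rewrite m00.
    move: c1 hr; rewrite mn0 /l; lia.
  have h := part1 (C1 := C1) (C2 := C2) m0 hr.
  have qn : ((l - r) %/ m <= n)%N.
    rewrite -(leq_pmul2r m0); apply: leq_trans (leq_trunc_div _ _) _.
    rewrite /l; lia.
  have -> : ceildiv (l - r + 1) m = ((l - r) %/ m).+1.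
    rewrite /ceildiv -addnA add1n prednK //. have -> : (l - r + m = l - r + 1 * m)%N by rewrite mul1n.
    by rewrite divnDMl // addn1.
  move: h qn; rewrite -/l; move: (dMr C1 C2 r) ((l - r) %/ m)%N => a b.
  lia.
rewrite /dR; case: pselect => [e|ne]; last first.
  by exfalso; apply: ne; exists (\rank A0); apply/asboolP; exists A0.
case: ex_minnP => d /asboolP [C [c1' c2' cd]] hmin.
have hd : forall A, A \in C1 -> A \notin C2 -> (d <= \rank A)%N.
  by move=> A a1 a2; apply: hmin; apply/asboolP; exists A.
have d1 : (1 <= d)%N.
  rewrite -cd lt0n mxrank_eq0; apply: contra c2' => /eqP ->; exact: mem0v.
have dm : (d <= m)%N by rewrite -cd rank_leq_row.
have dn : (d <= n)%N by rewrite -cd rank_leq_col.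
have h1 := part2 (C1 := C1) (C2 := C2) (introT andP (conj d1 dn)) hd.
have h2 := part2T (C1 := C1) (C2 := C2) (introT andP (conj d1 dm)) hd.
rewrite -/l in h1 h2.
case: (leqP m n) => hmn.
  have E : (m%:Z - d%:Z + 1 = (m - d + 1)%N%:Z) by rewrite PoszD subzn.
  by rewrite E -PoszM lez_nat.
have hnm : (n <= m)%N by apply: ltnW.
have E : (n%:Z - d%:Z + 1 = (n - d + 1)%N%:Z) by rewrite PoszD subzn.
by rewrite E -PoszM lez_nat.
Qed.
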